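(* Let $U^{(n)}$ be uniformly distributed on $\{1,\dots,n\}$ and, for $1\le m<n$, put $\widetilde U^{(n,m)}:=\prod_{m<p\le n,\ p\ \text{prime}}p^{\mathbbm{1}_{\{\lambda_p(U^{(n)})\ge1\}}}$. Assume that $m_n\le n^{1/2}$ for all sufficiently large $n$ and $m_n\to\infty$ as $n\to\infty$. Then $${\rm Var}\bigl(\log\widetilde U^{(n,m_n)}\bigr)\sim 2^{-1}\log^2 m_n,\qquad n\to\infty.$$
   Context: For a prime $p$ and $k\in\mathbb{N}$, $\lambda_p(k)$ is the exponent of $p$ in the prime factorization of $k$. $a_n\sim b_n$ means $a_n/b_n\to1$. *)

(* Defs.v *)
From mathcomp Require Import all_boot.
From Stdlib Require Import Reals.
From Coquelicot Require Import Coquelicot.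

(* lambda_p(k) = logn p k.
   utilde n m k = prod_{m < p <= n, p prime} p ^ 1{lambda_p(k) >= 1}. *)
Definition utilde (n m k : nat) : nat :=
  (\prod_(m.+1 <= p < n.+1 | prime p) p ^ (0 < logn p k))%N.

Definition unif_mean (n : nat) (X : nat -> R) : R :=
  Rdiv (\big[Rplus/0%R]_(1 <= k < n.+1) X k) (INR n).

Definition unif_var (n : nat) (X : nat -> R) : R :=
  unif_mean n (fun k => Rsqr (Rminus (X k) (unif_mean n X))).

(* Main.v *)
From HB Require Import structures.
Require Import Defs.
From mathcomp Require Import all_boot.
From Stdlib Require Import Reals.
From Coquelicot Require Import Coquelicot.
From Stdlib Require Import Lra Lia.
From mathcomp Require Import zify.
Open Scope R_scope.
Set Implicit Arguments.
Unset Strict Implicit.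

Lemma RplusA : associative Rplus. Proof. by move=> x y z; rewrite Rplus_assoc. Qed.
Lemma RmultA : associative Rmult. Proof. by move=> x y z; rewrite Rmult_assoc. Qed.
HB.instance Definition _ := Monoid.isComLaw.Build R 0 Rplus RplusA Rplus_comm Rplus_0_l.
HB.instance Definition _ := Monoid.isComLaw.Build R 1 Rmult RmultA Rmult_comm Rmult_1_l.
HB.instance Definition _ := Monoid.isMulLaw.Build R 0 Rmult Rmult_0_l Rmult_0_r.
HB.instance Definition _ := Monoid.isAddLaw.Build R Rmult Rplus Rmult_plus_distr_r Rmult_plus_distr_l.

Lemma sumR_le (a b : nat) (P : pred nat) (F G : nat -> R) :
  (forall i, (a <= i < b)%nat -> P i -> F i <= G i) ->
  \big[Rplus/0]_(a <= i < b | P i) F i <= \big[Rplus/0]_(a <= i < b | P i) G i.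
Proof.
move=> H; rewrite big_nat_cond [X in _ <= X]big_nat_cond.
apply: (big_ind2 (fun x y => x <= y)); first lra.
  by move=> x1 x2 y1 y2; lra.
by move=> i /andP[Hi Pi]; apply: H.
Qed.

Lemma sumR_ge0 (a b : nat) (P : pred nat) (F : nat -> R) :
  (forall i, (a <= i < b)%nat -> P i -> 0 <= F i) ->
  0 <= \big[Rplus/0]_(a <= i < b | P i) F i.
Proof.
move=> H; rewrite big_nat_cond.
apply: (big_ind (fun x => 0 <= x)); first lra.
  by move=> x y; lra.
by move=> i /andP[Hi Pi]; apply: H.
Qed.

Lemma sumR_abs (a b : nat) (P : pred nat) (F : nat -> R) :
  Rabs (\big[Rplus/0]_(a <= i < b | P i) F i) <= \big[Rplus/0]_(a <= i < b | P i) Rabs (F i).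
Proof.
apply: (big_ind2 (fun x y => Rabs x <= y)).
- rewrite Rabs_R0; lra.
- move=> x1 x2 y1 y2 H1 H2; apply: Rle_trans (Rabs_triang _ _) _; lra.
- move=> i _; lra.
Qed.

Lemma sumR_filter_le (a b : nat) (P : pred nat) (F : nat -> R) :
  (forall i, (a <= i < b)%nat -> 0 <= F i) ->
  \big[Rplus/0]_(a <= i < b | P i) F i <= \big[Rplus/0]_(a <= i < b) F i.
Proof.
move=> H; rewrite big_mkcond; apply: sumR_le => i Hi _.
by case: (P i); [lra | apply: H].
Qed.

Lemma sumR_const (a b : nat) (c : R) :
  \big[Rplus/0]_(a <= i < b) c = INR (b - a) * c.
Proof.
rewrite big_const_nat; elim: (b - a)%nat => [|k IH]; first (simpl; lra).
rewrite iterS IH S_INR; lra.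
Qed.

Lemma sumR_scale (a b : nat) (P : pred nat) (F : nat -> R) c :
  \big[Rplus/0]_(a <= i < b | P i) (c * F i) = c * \big[Rplus/0]_(a <= i < b | P i) F i.
Proof. by rewrite big_distrr. Qed.

Lemma INR_pos (k : nat) : (0 < k)%nat -> 0 < INR k.
Proof. move=> h; apply: lt_0_INR; apply/ltP; done. Qed.

Lemma expn_INR (p k : nat) : INR (expn p k) = INR p ^ k.
Proof. elim: k => [|k IH]; first by rewrite expn0. by rewrite expnS mult_INR IH. Qed.

Lemma ln_prod (r : seq nat) (P : pred nat) (f : nat -> nat) :
  (forall i, P i -> (0 < f i)%nat) ->
  ln (INR (\prod_(i <- r | P i) f i)) = \big[Rplus/0]_(i <- r | P i) ln (INR (f i)).
Proof.
move=> Hf.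
have: (0 < \prod_(i <- r | P i) f i)%nat /\
      ln (INR (\prod_(i <- r | P i) f i)) = \big[Rplus/0]_(i <- r | P i) ln (INR (f i)).
  apply: (big_rec2 (fun y1 y2 => (0 < y1)%nat /\ ln (INR y1) = y2)).
    by split => //; rewrite ln_1.
  move=> i y1 y2 Pi [H1 H2]; split; first by rewrite muln_gt0 Hf.
  rewrite mult_INR ln_mult ?H2 //; apply: INR_pos => //; exact: Hf.
by case.
Qed.

Lemma factor_prod (k N : nat) : (0 < k)%nat -> (k <= N)%nat ->
  k = (\prod_(0 <= p < N.+1 | prime p) expn p (logn p k))%nat.
Proof.
move=> k0 kN.
rewrite -{1}(partnT k0) (widen_partn _ kN) big_mkcond [RHS]big_mkcond /=.
apply: eq_bigr => p _; case pp: (prime p).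
  by [].
by rewrite lognE pp.
Qed.

Lemma ln_factor (k N : nat) : (0 < k)%nat -> (k <= N)%nat ->
  ln (INR k) = \big[Rplus/0]_(0 <= p < N.+1 | prime p) (INR (logn p k) * ln (INR p)).
Proof.
move=> k0 kN; rewrite {1}(factor_prod k0 kN) ln_prod.
  apply: eq_bigr => p pp; rewrite expn_INR ln_pow //; apply: INR_pos; exact: prime_gt0.
by move=> p pp; rewrite expn_gt0 prime_gt0.
Qed.

Lemma sumR_recr (m n : nat) (F : nat -> R) : (m <= n)%nat ->
  \big[Rplus/0]_(m <= i < n.+1) F i = \big[Rplus/0]_(m <= i < n) F i + F n.
Proof. by move=> h; rewrite big_nat_recr. Qed.

Lemma sumR_recr_cond (m n : nat) (P : pred nat) (F : nat -> R) : (m <= n)%nat ->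
  \big[Rplus/0]_(m <= i < n.+1 | P i) F i =
  \big[Rplus/0]_(m <= i < n | P i) F i + (if P n then F n else 0).
Proof.
move=> h; rewrite big_mkcond sumR_recr // -big_mkcond /=.
by case: (P n).
Qed.

Lemma sumR_opp (a b : nat) (P : pred nat) (F : nat -> R) :
  \big[Rplus/0]_(a <= i < b | P i) (- F i) = - \big[Rplus/0]_(a <= i < b | P i) F i.
Proof.
apply: (big_ind2 (fun x y => x = - y)); first lra.
  by move=> x1 x2 y1 y2 -> ->; lra.
done.
Qed.

Lemma sumR_add (a b : nat) (P : pred nat) (F G : nat -> R) :
  \big[Rplus/0]_(a <= i < b | P i) (F i + G i) =
  \big[Rplus/0]_(a <= i < b | P i) F i + \big[Rplus/0]_(a <= i < b | P i) G i.
Proof. by rewrite big_split. Qed.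

Lemma sumR_sub (a b : nat) (P : pred nat) (F G : nat -> R) :
  \big[Rplus/0]_(a <= i < b | P i) (F i - G i) =
  \big[Rplus/0]_(a <= i < b | P i) F i - \big[Rplus/0]_(a <= i < b | P i) G i.
Proof. by rewrite sumR_add sumR_opp. Qed.

Lemma INR_sum (a b : nat) (P : pred nat) (f : nat -> nat) :
  INR (\sum_(a <= i < b | P i) f i)%nat = \big[Rplus/0]_(a <= i < b | P i) INR (f i).
Proof.
apply: (big_ind2 (fun x y => INR x = y)); first done.
  by move=> x1 x2 y1 y2 <- <-; rewrite plus_INR.
done.
Qed.

Lemma sumR_cat (m n p : nat) (P : pred nat) (F : nat -> R) : (m <= n)%nat -> (n <= p)%nat ->
  \big[Rplus/0]_(m <= i < p | P i) F i =
  \big[Rplus/0]_(m <= i < n | P i) F i + \big[Rplus/0]_(n <= i < p | P i) F i.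
Proof. by move=> h1 h2; rewrite (@big_cat_nat _ _ _ n m p). Qed.

Lemma ln_0 : ln 0 = 0.
Proof. unfold ln; destruct (Rlt_dec 0 0) as [r|r]; [exfalso; exact: (Rlt_irrefl 0 r)|reflexivity]. Qed.

Lemma ln_le_sub1 x : 0 < x -> ln x <= x - 1.
Proof. move=> hx; have := exp_ineq1_le (ln x); rewrite exp_ln //; lra. Qed.

Lemma ln_ge0 x : 1 <= x -> 0 <= ln x.
Proof. move=> hx; rewrite -ln_1; apply: ln_le; lra. Qed.

Lemma lnS_diff (x : R) : 1 <= x -> 0 <= ln (x + 1) - ln x <= / x.
Proof.
move=> hx; split.
  have := ln_le x (x+1) ltac:(lra) ltac:(lra); lra.
rewrite -ln_div; try lra.
apply: Rle_trans (@ln_le_sub1 ((x+1)/x) _) _.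
  apply: Rdiv_lt_0_compat; lra.
apply: Req_le; field; lra.
Qed.

Lemma INR_ge1 (k : nat) : (1 <= k)%nat -> 1 <= INR k.
Proof. by move=> h; apply: (le_INR 1); apply/leP. Qed.

Lemma lnn_ge0 (k : nat) : 0 <= ln (INR k).
Proof.
case: k => [|k]; first by rewrite /= ln_0; lra.
apply: ln_ge0; exact: INR_ge1.
Qed.

Lemma lnfact_up (x : nat) : ln (INR x`!) <= INR x * ln (INR x).
Proof.
elim: x => [|x IH]; first by rewrite /= ln_1; lra.
rewrite factS mult_INR ln_mult; try (apply: INR_pos => //; exact: fact_gt0).
have h1 : ln (INR x) <= ln (INR x.+1).
  case: x IH => [|x] IH; first by rewrite /= ln_0 ln_1; apply: Rle_refl.
  apply: ln_le; first exact: INR_pos. apply: le_INR; apply/leP; done.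
have h2 := lnn_ge0 x.+1.
have h3 := pos_INR x.
have hS : INR x.+1 = INR x + 1 by rewrite S_INR.
have h4 : INR x * ln (INR x) <= INR x * ln (INR x.+1) by apply: Rmult_le_compat_l.
move: h1 h2 h4 IH; set l1 := ln (INR x.+1); rewrite hS => h1 h2 h4 IH; lra.
Qed.

Lemma lnfact_lo (x : nat) : (1 <= x)%nat -> INR x * ln (INR x) - INR x <= ln (INR x`!).
Proof.
elim: x => [|x IH] // _.
case: x IH => [|x] IH; first by rewrite /= ln_1; lra.
have {}IH := IH isT.
rewrite factS mult_INR ln_mult; try (apply: INR_pos => //; exact: fact_gt0).
have hx : 1 <= INR x.+1 by apply: INR_ge1.
have := lnS_diff hx.
rewrite -S_INR => hd.
have : INR x.+1 * (ln (INR x.+2) - ln (INR x.+1)) <= 1.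
  have -> : 1 = INR x.+1 * / INR x.+1 by field; lra.
  apply: Rmult_le_compat_l; lra.
have hS : INR x.+2 = INR x.+1 + 1 by rewrite S_INR.
move: IH; set L2 := ln (INR x.+2); set L1 := ln (INR x.+1); set F := ln _.
rewrite hS; set X := INR x.+1 => IH H; nra.
Qed.

Definition Gt (x : R) := (ln x ^ 2 + 4 * ln x + 9) / x.

Lemma tele_step (x : nat) : (1 <= x)%nat ->
  (1 + ln (INR x.+1) ^ 2) / (INR x.+1 * INR (x.+1 - 1)) <= Gt (INR x) - Gt (INR x.+1).
Proof.
move=> hx; rewrite subn1 /= -/(INR x.+1).
have hX : 1 <= INR x by apply: INR_ge1.
have := lnS_diff hX; rewrite -S_INR => hd.
set u := ln (INR x) in hd *; set v := ln (INR x.+1) in hd *.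
have hu : 0 <= u by apply: ln_ge0.
have hxd : INR x * (v - u) <= 1.
  have -> : 1 = INR x * / INR x by field; lra.
  apply: Rmult_le_compat_l; lra.
have hS : INR x.+1 = INR x + 1 by rewrite S_INR.
rewrite /Gt -/u -/v hS.
set X := INR x in hX hxd hS *.
have key : 1 + v ^ 2 <= (X + 1) * (u ^ 2 + 4 * u + 9) - X * (v ^ 2 + 4 * v + 9).
  have hd2 : (X + 1) * (v - u) <= 2 by nra.
  have e : (X + 1) * (u ^ 2 + 4 * u + 9) - X * (v ^ 2 + 4 * v + 9)
         = (v ^ 2 + 4 * v + 9) - (X + 1) * (v - u) * (u + v + 4) by ring.
  rewrite e.
  have : (X + 1) * (v - u) * (u + v + 4) <= 2 * (2 * v + 4).
    apply: Rmult_le_compat; nra.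
  nra.
apply: (Rmult_le_reg_r ((X + 1) * X)); first nra.
have -> : (1 + v ^ 2) / ((X + 1) * X) * ((X + 1) * X) = 1 + v ^ 2 by field; lra.
have -> : ((u ^ 2 + 4 * u + 9) / X - (v ^ 2 + 4 * v + 9) / (X + 1)) * ((X + 1) * X)
   = (X + 1) * (u ^ 2 + 4 * u + 9) - X * (v ^ 2 + 4 * v + 9) by field; lra.
exact: key.
Qed.

Lemma Gt_ge0 (x : nat) : (1 <= x)%nat -> 0 <= Gt (INR x).
Proof.
move=> hx; have h1 := INR_ge1 hx; have h2 := ln_ge0 h1.
rewrite /Gt; apply: Rdiv_le_0_compat; nra.
Qed.

Lemma tele_sum (x : nat) :
  \big[Rplus/0]_(2 <= j < x.+1) ((1 + ln (INR j) ^ 2) / (INR j * INR (j - 1))) <= 9.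
Proof.
suff H : forall x, (1 <= x)%nat ->
  \big[Rplus/0]_(2 <= j < x.+1) ((1 + ln (INR j) ^ 2) / (INR j * INR (j - 1))) <= 9 - Gt (INR x).
  case: x => [|x]; first by rewrite big_geq //; lra.
  have := H x.+1 isT; have := Gt_ge0 (x := x.+1) isT; lra.
clear x; elim=> [|x IH] // hx.
case: x IH hx => [|x] IH _.
  rewrite big_geq // /Gt /= ln_1; lra.
rewrite sumR_recr //.
have := IH isT; have := tele_step (x := x.+1) isT; lra.
Qed.

Lemma geom_le (r : R) (J : nat) : 0 <= r < 1 ->
  \big[Rplus/0]_(1 <= k < J.+1) r ^ k <= r / (1 - r).
Proof.
move=> hr.
suff : \big[Rplus/0]_(1 <= k < J.+1) r ^ k <= r / (1 - r) - r ^ J.+1 / (1 - r).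
  have : 0 <= r ^ J.+1 / (1 - r).
    apply: Rdiv_le_0_compat; [apply: pow_le | ]; lra.
  lra.
elim: J => [|J IH].
  rewrite big_geq //; apply: Req_le; rewrite /= Rmult_1_r; field; lra.
rewrite big_nat_recr //=.
have e : r / (1 - r) - r * (r * r ^ J) / (1 - r) = (r / (1 - r) - r * r ^ J / (1 - r)) + r * r ^ J.
  field; lra.
rewrite e; simpl in IH; lra.
Qed.

Lemma INR_div_bounds (a b : nat) : (0 < b)%nat ->
  INR a / INR b - 1 <= INR (a %/ b) <= INR a / INR b.
Proof.
move=> b0; have hb := INR_pos b0.
have e := divn_eq a b.
have hm : (a %% b < b)%nat by rewrite ltn_pmod.
have hmR : INR (a %% b) + 1 <= INR b.
  rewrite -S_INR; apply: le_INR; apply/leP; done.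
have hm0 := pos_INR (a %% b).
have eR : INR a = INR (a %/ b) * INR b + INR (a %% b).
  by rewrite {1}e plus_INR mult_INR.
split.
  apply: (Rmult_le_reg_r (INR b)) => //.
  have -> : (INR a / INR b - 1) * INR b = INR a - INR b by field; lra.
  lra.
apply: (Rmult_le_reg_r (INR b)) => //.
have -> : INR a / INR b * INR b = INR a by field; lra.
lra.
Qed.

Definition theta (x : nat) := \big[Rplus/0]_(0 <= p < x.+1 | prime p) ln (INR p).
Definition Mert (x : nat) := \big[Rplus/0]_(0 <= p < x.+1 | prime p) (ln (INR p) / INR p).

Lemma logn_fact_small p j : prime p -> (j < p)%nat -> logn p j`! = 0%nat.
Proof.
move=> pp hj; rewrite logn_fact // big_nat_cond big1 // => i /andP[/andP[hi _] _].
rewrite divn_small //; apply: leq_trans hj _.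
by rewrite -{1}(expn1 p) leq_pexp2l // prime_gt0.
Qed.

Lemma logn_fact_ge p j : prime p -> (0 < j)%nat -> (j %/ p <= logn p j`!)%nat.
Proof.
move=> pp hj; rewrite logn_fact // big_ltn //= expn1; exact: leq_addr.
Qed.

Lemma lnfact_primes x :
  ln (INR x`!) = \big[Rplus/0]_(0 <= p < x.+1 | prime p) (INR (logn p x`!) * ln (INR p)).
Proof.
rewrite (ln_factor (N := x`!)) ?fact_gt0 //.
rewrite (sumR_cat _ _ (n := x.+1)) // ?ltnS ?fact_geq //.
suff -> : \big[Rplus/0]_(x.+1 <= i < x`!.+1 | prime i) (INR (logn i x`!) * ln (INR i)) = 0.
  by rewrite Rplus_0_r.
rewrite big_nat_cond big1 // => p /andP[/andP[hp _] pp].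
by rewrite logn_fact_small // Rmult_0_l.
Qed.

Lemma sum_primes_le2 x (F : nat -> R) : (1 <= x)%nat -> (forall j, (2 <= j)%nat -> 0 <= F j) ->
  \big[Rplus/0]_(0 <= p < x.+1 | prime p) F p <= \big[Rplus/0]_(2 <= j < x.+1) F j.
Proof.
move=> hx hF; rewrite (sumR_cat _ _ (n := 2)) //.
have -> : \big[Rplus/0]_(0 <= i < 2 | prime i) F i = 0 by rewrite sumR_recr_cond // sumR_recr_cond // big_geq // (_ : prime 0 = false) // (_ : prime 1 = false) //; lra.
rewrite Rplus_0_l; apply: sumR_filter_le => i /andP[h _]; exact: hF.
Qed.

Lemma bin_mid_le k : ('C(k.*2.+1, k) <= expn 4 k)%nat.
Proof.
have := expnDn 1 1 k.*2.+1.
under eq_bigr => i _ do rewrite !exp1n !muln1.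
rewrite -(big_mkord xpredT (fun i => 'C(k.*2.+1, i))).
rewrite (@big_cat_nat _ _ _ k 0 k.*2.+2) //; last lia.
rewrite (@big_cat_nat _ _ _ k.+2 k k.*2.+2) //; [|lia|lia].
rewrite (@big_ltn _ _ _ k k.+2) // (@big_ltn _ _ _ k.+1 k.+2) // (@big_geq _ _ _ k.+2 k.+2) //.
have e : 'C(k.*2.+1, k.+1) = 'C(k.*2.+1, k).
  rewrite -(bin_sub (n := k.*2.+1) (m := k)); last lia.
  congr 'C(_, _); lia.
rewrite e => H.
have h4 : expn 4 k = expn 2 k.*2 by rewrite -addnn expnD -expnMn.
move: H; set a := \big[_/_]_(0 <= i < k) _; set b := \big[_/_]_(k.+2 <= i < _) _ => H.
have H2 : (expn 2 k.*2.+1 = a + ('C(k.*2.+1, k) + ('C(k.*2.+1, k) + 0)) + b)%nat.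
  rewrite -addnA; exact H.
rewrite h4; move: H2; rewrite expnS; lia.
Qed.

Lemma ln4_pos : 0 < ln 4.
Proof. rewrite -ln_1; apply: ln_increasing; lra. Qed.

Lemma ln2_le : ln 2 <= ln 4.
Proof. apply: ln_le; lra. Qed.

Lemma bin_logn_ge1 k p : prime p -> (k.+1 < p)%nat -> (p <= k.*2.+1)%nat ->
  (1 <= logn p 'C(k.*2.+1, k))%nat.
Proof.
move=> pp h1 h2.
have hk : (k <= k.*2.+1)%nat by lia.
have e := bin_fact hk.
have hs : (k.*2.+1 - k = k.+1)%nat by rewrite -addnn; lia.
rewrite hs in e.
have hc : (0 < 'C(k.*2.+1, k))%nat by rewrite bin_gt0 -addnn; lia.
have := congr1 (logn p) e.
rewrite lognM ?muln_gt0 ?fact_gt0 // lognM ?fact_gt0 //.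
rewrite (logn_fact_small (j:=k)) //; last lia.
rewrite (logn_fact_small (j:=k.+1)) //.
have := logn_fact_ge pp (isT : (0 < k.*2.+1)%nat).
have : (1 <= k.*2.+1 %/ p)%nat by rewrite divn_gt0 ?prime_gt0.
lia.
Qed.

Lemma mid_le k : \big[Rplus/0]_(k.+2 <= p < k.*2.+2 | prime p) ln (INR p) <= INR k * ln 4.
Proof.
set C := 'C(k.*2.+1, k).
have hc : (0 < C)%nat by rewrite bin_gt0 -addnn; lia.
have hlnC : ln (INR C) <= INR k * ln 4.
  have hC : INR C <= 4 ^ k.
    have := bin_mid_le k; rewrite -/C => h.
    have -> : 4 = INR 4 by simpl; lra.
    rewrite -expn_INR; apply: le_INR; apply/leP; done.
  rewrite -ln_pow; last lra.
  apply: ln_le => //; exact: INR_pos.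
apply: Rle_trans hlnC.
rewrite (ln_factor (N := (C + k.*2.+1)%nat)) //; last exact: leq_addr.
have s0 : (0 <= k.+2)%nat by [].
have s1 : (k.+2 <= k.*2.+2)%nat by rewrite -addnn; lia.
have s2 : (k.*2.+2 <= (C + k.*2.+1).+1)%nat by lia.
rewrite (@sumR_cat 0 k.+2 _ _ _ s0 (leq_trans s1 s2)).
rewrite (@sumR_cat k.+2 k.*2.+2 _ _ _ s1 s2).
have h1 : 0 <= \big[Rplus/0]_(0 <= i < k.+2 | prime i) (INR (logn i C) * ln (INR i)).
  apply: sumR_ge0 => i _ _; apply: Rmult_le_pos; [apply: pos_INR | apply: lnn_ge0].
have h3 : 0 <= \big[Rplus/0]_(k.*2.+2 <= i < (C + k.*2.+1).+1 | prime i) (INR (logn i C) * ln (INR i)).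
  apply: sumR_ge0 => i _ _; apply: Rmult_le_pos; [apply: pos_INR | apply: lnn_ge0].
suff : \big[Rplus/0]_(k.+2 <= p < k.*2.+2 | prime p) ln (INR p) <=
       \big[Rplus/0]_(k.+2 <= i < k.*2.+2 | prime i) (INR (logn i C) * ln (INR i)) by lra.
apply: sumR_le => i /andP[hi1 hi2] pi.
have hl := bin_logn_ge1 pi hi1 hi2.
have : 1 <= INR (logn i C) by apply: INR_ge1.
have := lnn_ge0 i; nra.
Qed.

Lemma theta_le x : theta x <= INR x * ln 4.
Proof.
elim/ltn_ind: x => x IH.
have l4 := ln4_pos; have l2 := ln2_le.
case: x IH => [|[|[|x]]] IH.
- rewrite /theta sumR_recr_cond // big_geq // (_ : prime 0 = false) //; simpl; lra.
- rewrite /theta sumR_recr_cond // sumR_recr_cond // big_geq // (_ : prime 0 = false) // (_ : prime 1 = false) //; simpl; lra.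
- rewrite /theta sumR_recr_cond // sumR_recr_cond // sumR_recr_cond // big_geq // (_ : prime 0 = false) // (_ : prime 1 = false) // (_ : prime 2 = true) //.
  have : 0 <= ln 2 by apply: ln_ge0; lra.
  simpl; rewrite (_ : 1 + 1 = 2); lra.
case: (boolP (odd x)) => hodd.
-
  have np : prime x.+3 = false.
    apply/negbTE/negP => pp; case: (even_prime pp) => // h.
    by move: h; rewrite /= hodd.
  rewrite /theta sumR_recr_cond // np Rplus_0_r -/(theta x.+2).
  have := IH x.+2 (ltnSn _); rewrite !S_INR; lra.
-
  have [k hk] : exists k, x.+3 = k.*2.+1.
    exists (x.+2)./2; rewrite -[in LHS](odd_double_half x.+2) /=.
    by rewrite (negbTE hodd).
  have hk1 : (1 <= k)%nat by move: hk; rewrite -addnn; lia.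
  rewrite hk /theta (sumR_cat _ _ (n := k.+2)) //; last by rewrite -addnn; lia.
  have hIH := IH k.+1 ltac:(by rewrite hk -addnn; lia).
  rewrite /theta in hIH.
  have hm := mid_le k.
  have e : INR k.*2.+1 = INR k.+1 + INR k by rewrite -plus_INR; congr INR; rewrite -addnn; lia.
  rewrite e; lra.
Qed.

Lemma INR_pred (j : nat) : (1 <= j)%nat -> INR (j - 1) = INR j - 1.
Proof. by move=> h; rewrite minus_INR //=; apply/leP. Qed.

Lemma prime_ge2R p : prime p -> 2 <= INR p.
Proof. move=> pp; apply: (le_INR 2); apply/leP; exact: prime_gt1. Qed.

Lemma logn_fact_upR p x : prime p -> INR (logn p x`!) <= INR x / (INR p - 1).
Proof.
move=> pp; have hp := prime_ge2R pp.
rewrite logn_fact // INR_sum.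
set r := / INR p.
have hr : 0 <= r < 1.
  rewrite /r; split; first (apply: Rlt_le; apply: Rinv_0_lt_compat; lra).
  rewrite -Rinv_1; apply: Rinv_lt_contravar; lra.
apply: Rle_trans (_ : \big[Rplus/0]_(1 <= k < x.+1) (INR x * r ^ k) <= _).
  apply: sumR_le => k _ _.
  have hpk : (0 < expn p k)%nat by rewrite expn_gt0 prime_gt0.
  apply: Rle_trans (proj2 (INR_div_bounds x hpk)) _.
  rewrite expn_INR /r pow_inv; apply: Req_le; rewrite /Rdiv; done.
rewrite sumR_scale.
have hg := geom_le x hr.
have -> : INR x / (INR p - 1) = INR x * (r / (1 - r)).
  rewrite /r; field; lra.
apply: Rmult_le_compat_l => //; exact: pos_INR.
Qed.

Lemma mert_up x : (1 <= x)%nat -> Mert x <= ln (INR x) + ln 4.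
Proof.
move=> hx; have hX := INR_ge1 hx.
have A := lnfact_primes x; have B := lnfact_up x; have T := theta_le x.
have L : INR x * Mert x - theta x <=
   \big[Rplus/0]_(0 <= p < x.+1 | prime p) (INR (logn p x`!) * ln (INR p)).
  rewrite /Mert /theta -sumR_scale -sumR_sub.
  apply: sumR_le => p _ pp.
  have hp := prime_ge2R pp.
  have hl := logn_fact_ge pp hx.
  have hp0 : (0 < p)%nat by exact: prime_gt0.
  have := proj1 (INR_div_bounds x hp0).
  have : INR (x %/ p) <= INR (logn p x`!) by apply: le_INR; apply/leP.
  have := lnn_ge0 p.
  have -> : INR x * (ln (INR p) / INR p) - ln (INR p) = (INR x / INR p - 1) * ln (INR p).
    field; lra.
  nra.
have : INR x * Mert x <= INR x * (ln (INR x) + ln 4) by lra.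
move=> h; apply: (Rmult_le_reg_l (INR x)) => //; lra.
Qed.

Lemma S_bound x : \big[Rplus/0]_(0 <= p < x.+1 | prime p) (ln (INR p) / (INR p * (INR p - 1))) <= 9.
Proof.
case: x => [|x].
  rewrite sumR_recr_cond // big_geq // (_ : prime 0 = false) //; lra.
apply: (Rle_trans _ (\big[Rplus/0]_(2 <= j < x.+2) (ln (INR j) / (INR j * (INR j - 1))))).
  apply: sum_primes_le2 => // j hj; have hJ : 2 <= INR j by apply: (le_INR 2); apply/leP.
  apply: Rdiv_le_0_compat; [apply: lnn_ge0 | nra].
apply: Rle_trans (tele_sum x.+1).
apply: sumR_le => j hj _.
have hj1 : (1 <= j)%nat by case/andP: hj => h _; lia.
have hJ : 2 <= INR j by apply: (le_INR 2); apply/leP; case/andP: hj.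
rewrite INR_pred //.
apply: Rmult_le_compat_r.
  apply: Rlt_le; apply: Rinv_0_lt_compat; nra.
have := lnn_ge0 j; nra.
Qed.

Lemma mert_lo x : (1 <= x)%nat -> ln (INR x) - 10 <= Mert x.
Proof.
move=> hx; have hX := INR_ge1 hx.
have A := lnfact_primes x; have B := lnfact_lo hx; have S := S_bound x.
have U : \big[Rplus/0]_(0 <= p < x.+1 | prime p) (INR (logn p x`!) * ln (INR p)) <=
   INR x * (Mert x + \big[Rplus/0]_(0 <= p < x.+1 | prime p) (ln (INR p) / (INR p * (INR p - 1)))).
  rewrite /Mert -sumR_add -sumR_scale.
  apply: sumR_le => p _ pp.
  have hp := prime_ge2R pp.
  have := logn_fact_upR x pp.
  have := lnn_ge0 p.
  have -> : INR x * (ln (INR p) / INR p + ln (INR p) / (INR p * (INR p - 1)))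
          = (INR x / (INR p - 1)) * ln (INR p).
    field; lra.
  move=> h1 h2; apply: Rmult_le_compat_r => //.
have : INR x * ln (INR x) - INR x <= INR x * (Mert x + 9).
  have : INR x * (Mert x + \big[Rplus/0]_(0 <= p < x.+1 | prime p) (ln (INR p) / (INR p * (INR p - 1))))
       <= INR x * (Mert x + 9) by apply: Rmult_le_compat_l; lra.
  lra.
move=> h; apply: (Rmult_le_reg_l (INR x)); first lra.
have -> : INR x * (ln (INR x) - 10) = INR x * ln (INR x) - INR x - 9 * INR x by ring.
lra.
Qed.

Definition Dm (x : nat) := \big[Rplus/0]_(0 <= p < x.+1 | prime p) (ln (INR p) ^ 2 / INR p).

Definition Phi (x : nat) :=
  Dm x - ln (INR x) ^ 2 / 2 - (Mert x - ln (INR x)) * ln (INR x).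

Lemma Phi_step x : (1 <= x)%nat ->
  Phi x.+1 - Phi x = (ln (INR x.+1) - ln (INR x)) ^ 2 / 2
                     - (Mert x - ln (INR x)) * (ln (INR x.+1) - ln (INR x)).
Proof.
move=> hx; rewrite /Phi /Dm /Mert !(sumR_recr_cond (m:=0) (n:=x.+1)) //.
set S2 := \big[Rplus/0]_(0 <= p < x.+1 | prime p) (ln (INR p) ^ 2 / INR p).
set S1 := \big[Rplus/0]_(0 <= p < x.+1 | prime p) (ln (INR p) / INR p).
have hX : INR x.+1 <> 0 by apply: not_0_INR.
case: (prime x.+1); field => //.
Qed.

Lemma Phi_bound x : (1 <= x)%nat -> Rabs (Phi x) <= 21 / 2 * ln (INR x).
Proof.
elim: x => [|x IH] // hx.
case: x IH hx => [|x] IH _.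
  rewrite /Phi /Dm /Mert /= ln_1 sumR_recr_cond // sumR_recr_cond // big_geq //
    (_ : prime 0 = false) // (_ : prime 1 = false) //.
  match goal with |- Rabs ?e <= _ => have -> : e = 0 by field end.
  rewrite Rabs_R0; lra.
have {}IH := IH isT.
have hx1 : (1 <= x.+1)%nat by [].
have e := Phi_step hx1.
have hX := INR_ge1 hx1.
have hd := lnS_diff hX; rewrite -S_INR in hd.
have hup := mert_up hx1; have hlo := mert_lo hx1.
have l4 : ln 4 <= 10.
  have := ln_le_sub1 (x := 4) ltac:(lra); lra.
have hdx : ln (INR x.+2) - ln (INR x.+1) <= 1.
  have : / INR x.+1 <= 1.
    rewrite -Rinv_1; apply: Rinv_le_contravar; lra.
  lra.
set D := ln (INR x.+2) - ln (INR x.+1) in e hd hdx *.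
set E := Mert x.+1 - ln (INR x.+1) in e *.
have hE : Rabs E <= 10 by rewrite /E; apply: Rabs_le; lra.
have hstep : Rabs (Phi x.+2 - Phi x.+1) <= 21 / 2 * D.
  rewrite e; apply: Rle_trans (Rabs_triang _ _) _.
  rewrite Rabs_Ropp Rabs_mult (Rabs_right D); last lra.
  rewrite Rabs_right; last (apply: Rle_ge; apply: Rdiv_le_0_compat; [apply: pow2_ge_0|lra]).
  have : Rabs E * D <= 10 * D by apply: Rmult_le_compat_r; lra.
  have : D ^ 2 / 2 <= D / 2 by rewrite /Rdiv; apply: Rmult_le_compat_r; [lra | simpl; nra].
  lra.
have : Phi x.+2 = Phi x.+1 + (Phi x.+2 - Phi x.+1) by ring.
move=> ->; apply: Rle_trans (Rabs_triang _ _) _.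
rewrite /D in hstep; lra.
Qed.

Lemma Dm_asym x : (1 <= x)%nat -> Rabs (Dm x - ln (INR x) ^ 2 / 2) <= 21 * ln (INR x).
Proof.
move=> hx; have hP := Phi_bound hx.
have hup := mert_up hx; have hlo := mert_lo hx.
have l4 : ln 4 <= 10.
  have := ln_le_sub1 (x := 4) ltac:(lra); lra.
have hl := ln_ge0 (INR_ge1 hx).
have e : Dm x - ln (INR x) ^ 2 / 2 = Phi x + (Mert x - ln (INR x)) * ln (INR x) by rewrite /Phi; ring.
rewrite e; apply: Rle_trans (Rabs_triang _ _) _.
rewrite Rabs_mult (Rabs_right (ln (INR x))); last lra.
have : Rabs (Mert x - ln (INR x)) <= 10 by apply: Rabs_le; lra.
nra.
Qed.

Lemma mean_ext n (X Y : nat -> R) : (forall k, (1 <= k <= n)%nat -> X k = Y k) ->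
  unif_mean n X = unif_mean n Y.
Proof.
move=> H; rewrite /unif_mean; congr Rdiv.
apply: eq_big_nat => k /andP[h1 h2]; apply: H; lia.
Qed.

Lemma var_ext n (X Y : nat -> R) : (forall k, (1 <= k <= n)%nat -> X k = Y k) ->
  unif_var n X = unif_var n Y.
Proof.
move=> H; rewrite /unif_var (mean_ext H); apply: mean_ext => k hk; rewrite H //.
Qed.

Lemma mean_add n (X Y : nat -> R) : unif_mean n (fun k => X k + Y k) = unif_mean n X + unif_mean n Y.
Proof. rewrite /unif_mean sumR_add /Rdiv; ring. Qed.

Lemma mean_sub n (X Y : nat -> R) : unif_mean n (fun k => X k - Y k) = unif_mean n X - unif_mean n Y.
Proof. rewrite /unif_mean sumR_sub /Rdiv; ring. Qed.

Lemma mean_scale n c (X : nat -> R) : unif_mean n (fun k => c * X k) = c * unif_mean n X.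
Proof. rewrite /unif_mean sumR_scale /Rdiv; ring. Qed.

Lemma mean_const n c : (1 <= n)%nat -> unif_mean n (fun _ => c) = c.
Proof.
move=> hn; rewrite /unif_mean sumR_const subn1 /=.
have hN := INR_pos hn; field; lra.
Qed.

Lemma mean_le n (X Y : nat -> R) : (1 <= n)%nat -> (forall k, (1 <= k <= n)%nat -> X k <= Y k) ->
  unif_mean n X <= unif_mean n Y.
Proof.
move=> hn H; rewrite /unif_mean /Rdiv; apply: Rmult_le_compat_r.
  apply: Rlt_le; apply: Rinv_0_lt_compat; exact: INR_pos.
apply: sumR_le => k hk _; apply: H; lia.
Qed.

Lemma var_alt n (X : nat -> R) : (1 <= n)%nat ->
  unif_var n X = unif_mean n (fun k => X k ^ 2) - unif_mean n X ^ 2.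
Proof.
move=> hn; rewrite /unif_var.
set mu := unif_mean n X.
have -> : unif_mean n (fun k => Rsqr (X k - mu)) =
          unif_mean n (fun k => X k ^ 2 + ((-2 * mu) * X k + mu ^ 2)).
  by apply: mean_ext => k _; rewrite /Rsqr; ring.
rewrite mean_add mean_add mean_scale mean_const // -/mu; ring.
Qed.

Lemma var_le_c n (X : nat -> R) c : (1 <= n)%nat ->
  unif_var n X <= unif_mean n (fun k => (X k - c) ^ 2).
Proof.
move=> hn; rewrite var_alt //.
have -> : unif_mean n (fun k => (X k - c) ^ 2) =
          unif_mean n (fun k => X k ^ 2 + ((-2 * c) * X k + c ^ 2)).
  by apply: mean_ext => k _; ring.
rewrite mean_add mean_add mean_scale mean_const //.
set mu := unif_mean n X.
have : 0 <= (mu - c) ^ 2 by apply: pow2_ge_0.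
lra.
Qed.

Lemma var_ge0 n (X : nat -> R) : (1 <= n)%nat -> 0 <= unif_var n X.
Proof.
move=> hn; rewrite /unif_var.
have -> : 0 = unif_mean n (fun _ => 0) by rewrite mean_const.
apply: mean_le => // k _; apply: Rle_0_sqr.
Qed.

Lemma var_diff_bounds n (A B : nat -> R) eps : (1 <= n)%nat -> 0 < eps ->
  (1 - eps) * unif_var n B - / eps * unif_var n A <= unif_var n (fun k => A k - B k) <=
  (1 + eps) * unif_var n B + (1 + / eps) * unif_var n A.
Proof.
move=> hn he.
have ce : forall k, (A k - B k) - unif_mean n (fun k => A k - B k) =
                   (A k - unif_mean n A) - (B k - unif_mean n B).
  by move=> k; rewrite mean_sub; ring.
have key : forall a b, 2 * a * b <= eps * b ^ 2 + / eps * a ^ 2.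
  move=> a b.
  have h : 0 <= (eps * b - a) ^ 2 by apply: pow2_ge_0.
  have : eps * (2 * a * b) <= eps * (eps * b ^ 2 + / eps * a ^ 2).
    have -> : eps * (eps * b ^ 2 + / eps * a ^ 2) = eps ^ 2 * b ^ 2 + a ^ 2 by field; lra.
    nra.
  move=> h2; apply: (Rmult_le_reg_l eps) => //.
have key2 : forall a b, - (2 * a * b) <= eps * b ^ 2 + / eps * a ^ 2.
  move=> a b; have := key (- a) b; lra.
have hi : 0 < / eps by apply: Rinv_0_lt_compat.
rewrite /unif_var; split.
- rewrite -!mean_scale -mean_sub; apply: mean_le => // k _.
  rewrite ce /Rsqr; set a := A k - _; set b := B k - _.
  have := key a b; nra.
- rewrite -!mean_scale -mean_add; apply: mean_le => // k _.
  rewrite ce /Rsqr; set a := A k - _; set b := B k - _.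
  have := key2 a b; nra.
Qed.

Definition ind (d k : nat) : R := if (d %| k)%nat then 1 else 0.
Definition Tm (m k : nat) := \big[Rplus/0]_(0 <= p < m.+1 | prime p) (ln (INR p) * ind p k).
Definition gm (n d : nat) := INR (n %/ d) / INR n.

Lemma count_div n d : (0 < d)%nat -> \big[Rplus/0]_(1 <= k < n.+1) ind d k = INR (n %/ d).
Proof.
move=> hd; elim: n => [|n IH]; first by rewrite big_geq // div0n.
rewrite sumR_recr // IH divnS // plus_INR /ind; case: (d %| n.+1)%nat => /=; lra.
Qed.

Lemma mean_ind n d : (0 < d)%nat -> unif_mean n (ind d) = gm n d.
Proof. by move=> hd; rewrite /unif_mean count_div. Qed.

Lemma ind_mul p q k : ind p k * ind q k = ind (lcmn p q) k.
Proof. rewrite /ind dvdn_lcm; case: (p %| k)%nat; case: (q %| k)%nat => /=; ring. Qed.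

Lemma mean_sum n a b (P : pred nat) (F : nat -> nat -> R) :
  unif_mean n (fun k => \big[Rplus/0]_(a <= p < b | P p) F p k) =
  \big[Rplus/0]_(a <= p < b | P p) unif_mean n (F p).
Proof.
rewrite /unif_mean exchange_big_nat /Rdiv big_distrl /=.
done.
Qed.

Lemma sum_single a b (P : pred nat) (F : nat -> R) j : (a <= j < b)%nat -> P j ->
  (forall i, P i -> i <> j -> F i = 0) -> \big[Rplus/0]_(a <= i < b | P i) F i = F j.
Proof.
move=> hj pj H.
rewrite big_mkcond (bigD1_seq j) ?mem_index_iota ?iota_uniq //= pj.
rewrite big1 ?Rplus_0_r // => i /eqP hij; case: (boolP (P i)) => pi //.
exact: H.
Qed.

Lemma sq_sum a b (P : pred nat) (F : nat -> R) :
  (\big[Rplus/0]_(a <= p < b | P p) F p) ^ 2 =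
  \big[Rplus/0]_(a <= p < b | P p) \big[Rplus/0]_(a <= q < b | P q) (F p * F q).
Proof. by rewrite /= Rmult_1_r big_distrlr. Qed.

Lemma var_T n m : (1 <= n)%nat ->
  unif_var n (Tm m) = \big[Rplus/0]_(0 <= p < m.+1 | prime p) \big[Rplus/0]_(0 <= q < m.+1 | prime q)
      (ln (INR p) * ln (INR q) * (gm n (lcmn p q) - gm n p * gm n q)).
Proof.
move=> hn; rewrite var_alt //.
have e1 : unif_mean n (fun k => Tm m k ^ 2) =
  \big[Rplus/0]_(0 <= p < m.+1 | prime p) \big[Rplus/0]_(0 <= q < m.+1 | prime q)
      (ln (INR p) * ln (INR q) * gm n (lcmn p q)).
  rewrite (mean_ext (Y := fun k => \big[Rplus/0]_(0 <= p < m.+1 | prime p)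
        \big[Rplus/0]_(0 <= q < m.+1 | prime q) (ln (INR p) * ln (INR q) * ind (lcmn p q) k))).
    rewrite mean_sum; apply: eq_bigr => p pp; rewrite mean_sum; apply: eq_bigr => q pq.
    rewrite mean_scale mean_ind // lcmn_gt0 !prime_gt0 //.
  move=> k _; rewrite /Tm sq_sum; apply: eq_bigr => p _; apply: eq_bigr => q _.
  rewrite -ind_mul; ring.
have e2 : unif_mean n (Tm m) = \big[Rplus/0]_(0 <= p < m.+1 | prime p) (ln (INR p) * gm n p).
  rewrite /Tm mean_sum; apply: eq_bigr => p pp; rewrite mean_scale mean_ind // prime_gt0 //.
rewrite e1 e2 sq_sum -sumR_sub; apply: eq_bigr => p _; rewrite -sumR_sub.
by apply: eq_bigr => q _; ring.
Qed.

Lemma gm_bounds n d : (1 <= n)%nat -> (0 < d)%nat ->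
  / INR d - / INR n <= gm n d <= / INR d /\ 0 <= gm n d.
Proof.
move=> hn hd; have hN := INR_pos hn; have hD := INR_pos hd.
have [h1 h2] := INR_div_bounds n hd.
rewrite /gm; split; [split|].
- apply: (Rmult_le_reg_r (INR n)) => //.
  have -> : INR (n %/ d) / INR n * INR n = INR (n %/ d) by field; lra.
  have -> : (/ INR d - / INR n) * INR n = INR n / INR d - 1 by field; lra.
  lra.
- apply: (Rmult_le_reg_r (INR n)) => //.
  have -> : INR (n %/ d) / INR n * INR n = INR (n %/ d) by field; lra.
  have -> : / INR d * INR n = INR n / INR d by field; lra.
  lra.
- apply: Rdiv_le_0_compat => //; exact: pos_INR.
Qed.

Lemma term_bound n p q : (1 <= n)%nat -> prime p -> prime q ->
  Rabs ((gm n (lcmn p q) - gm n p * gm n q) - (/ INR (lcmn p q) - / INR p * / INR q)) <= 3 / INR n.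
Proof.
move=> hn pp pq.
have hl : (0 < lcmn p q)%nat by rewrite lcmn_gt0 !prime_gt0.
have [[a1 a2] a3] := gm_bounds hn hl.
have [[b1 b2] b3] := gm_bounds hn (prime_gt0 pp).
have [[c1 c2] c3] := gm_bounds hn (prime_gt0 pq).
have hp := prime_ge2R pp; have hq := prime_ge2R pq.
have ip : 0 < / INR p <= 1.
  split; first (apply: Rinv_0_lt_compat; lra).
  rewrite -Rinv_1; apply: Rinv_le_contravar; lra.
have iq : 0 < / INR q <= 1.
  split; first (apply: Rinv_0_lt_compat; lra).
  rewrite -Rinv_1; apply: Rinv_le_contravar; lra.
set G := gm n (lcmn p q) in a1 a2 a3 *; set Gp := gm n p in b1 b2 b3 *; set Gq := gm n q in c1 c2 c3 *.
set L := / INR (lcmn p q) in a1 a2 *; set P := / INR p in b1 b2 ip *; set Q := / INR q in c1 c2 iq *.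
set N := / INR n in a1 b1 c1 *.
have -> : 3 / INR n = 3 * N by rewrite /N /Rdiv.
have e : P * Q - Gp * Gq = P * (Q - Gq) + Gq * (P - Gp) by ring.
have h1 : 0 <= P * (Q - Gq) <= N.
  split; first (apply: Rmult_le_pos; lra).
  have : P * (Q - Gq) <= 1 * (Q - Gq) by apply: Rmult_le_compat_r; lra.
  lra.
have h2 : 0 <= Gq * (P - Gp) <= N.
  split; first (apply: Rmult_le_pos; lra).
  have : Gq * (P - Gp) <= 1 * (P - Gp) by apply: Rmult_le_compat_r; lra.
  lra.
apply: Rabs_le; lra.
Qed.

Lemma lcmn_primes p q : prime p -> prime q -> p <> q -> lcmn p q = (p * q)%nat.
Proof.
move=> pp pq hpq.
have cop : coprime p q by rewrite prime_coprime // dvdn_prime2 //; apply/eqP.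
have := muln_lcm_gcd p q; move/eqP: cop => ->; by rewrite muln1.
Qed.

Lemma main_identity m :
  \big[Rplus/0]_(0 <= p < m.+1 | prime p) \big[Rplus/0]_(0 <= q < m.+1 | prime q)
      (ln (INR p) * ln (INR q) * (/ INR (lcmn p q) - / INR p * / INR q)) =
  \big[Rplus/0]_(0 <= p < m.+1 | prime p) (ln (INR p) ^ 2 * (/ INR p - / INR p ^ 2)).
Proof.
rewrite big_nat_cond [RHS]big_nat_cond; apply: eq_bigr => p /andP[hp pp].
rewrite (sum_single (j := p)) //.
  rewrite (_ : lcmn p p = p); last by apply/lcmn_idPl.
  by simpl; field; have := prime_ge2R pp; lra.
move=> q pq hqp; rewrite lcmn_primes //; last by apply: nesym.
rewrite mult_INR.
have := prime_ge2R pp; have := prime_ge2R pq => h1 h2.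
rewrite Rinv_mult; ring.
Qed.

Lemma sq_over_bound m : 0 <= \big[Rplus/0]_(0 <= p < m.+1 | prime p) (ln (INR p) ^ 2 / INR p ^ 2) <= 9.
Proof.
split.
  apply: sumR_ge0 => p _ pp; apply: Rdiv_le_0_compat; [apply: pow2_ge_0|].
  have := prime_ge2R pp; nra.
case: m => [|m].
  rewrite sumR_recr_cond // big_geq // (_ : prime 0 = false) //; lra.
apply: (Rle_trans _ (\big[Rplus/0]_(2 <= j < m.+2) (ln (INR j) ^ 2 / INR j ^ 2))).
  apply: sum_primes_le2 => // j hj; have hJ : 2 <= INR j by apply: (le_INR 2); apply/leP.
  apply: Rdiv_le_0_compat; [apply: pow2_ge_0 | nra].
apply: Rle_trans (tele_sum m.+1).
apply: sumR_le => j hj _.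
have hj1 : (1 <= j)%nat by case/andP: hj => h _; lia.
have hJ : 2 <= INR j by apply: (le_INR 2); apply/leP; case/andP: hj.
rewrite INR_pred //.
have h0 : 0 <= ln (INR j) ^ 2 by apply: pow2_ge_0.
rewrite /Rdiv.
apply: Rmult_le_compat; try lra.
  apply: Rlt_le; apply: Rinv_0_lt_compat; nra.
apply: Rinv_le_contravar; nra.
Qed.

Lemma ln4_le3 : ln 4 <= 3.
Proof. have := ln_le_sub1 (x := 4) ltac:(lra); lra. Qed.

Lemma varT_bound n m : (1 <= m)%nat -> (1 <= n)%nat -> INR m ^ 2 <= INR n ->
  Rabs (unif_var n (Tm m) - Dm m) <= 36.
Proof.
move=> hm hn hmn.
have hN := INR_pos hn.
set c := fun p q => ln (INR p) * ln (INR q) * (gm n (lcmn p q) - gm n p * gm n q).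
set g := fun p q => ln (INR p) * ln (INR q) * (/ INR (lcmn p q) - / INR p * / INR q).
have E1 : Rabs (unif_var n (Tm m) -
    \big[Rplus/0]_(0 <= p < m.+1 | prime p) \big[Rplus/0]_(0 <= q < m.+1 | prime q) g p q)
    <= 3 / INR n * theta m ^ 2.
  rewrite var_T // -sumR_sub.
  apply: Rle_trans (sumR_abs _ _ _ _) _.
  rewrite /theta sq_sum -sumR_scale; apply: sumR_le => p _ pp.
  rewrite -sumR_sub; apply: Rle_trans (sumR_abs _ _ _ _) _.
  rewrite -sumR_scale; apply: sumR_le => q _ pq.
  have hb := term_bound hn pp pq.
  have lp := lnn_ge0 p; have lq := lnn_ge0 q.
  have -> : ln (INR p) * ln (INR q) * (gm n (lcmn p q) - gm n p * gm n q) -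
            ln (INR p) * ln (INR q) * (/ INR (lcmn p q) - / INR p * / INR q)
          = (ln (INR p) * ln (INR q)) * ((gm n (lcmn p q) - gm n p * gm n q) - (/ INR (lcmn p q) - / INR p * / INR q)) by ring.
  rewrite Rabs_mult (Rabs_right (ln (INR p) * ln (INR q))); last (apply: Rle_ge; nra).
  have hpq : 0 <= ln (INR p) * ln (INR q) by nra.
  have := Rmult_le_compat_l _ _ _ hpq hb; lra.
have E2 := main_identity m.
have E3 : \big[Rplus/0]_(0 <= p < m.+1 | prime p) (ln (INR p) ^ 2 * (/ INR p - / INR p ^ 2))
   = Dm m - \big[Rplus/0]_(0 <= p < m.+1 | prime p) (ln (INR p) ^ 2 / INR p ^ 2).
  rewrite /Dm -sumR_sub; apply: eq_bigr => p pp.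
  have := prime_ge2R pp => h; field; lra.
have E4 := sq_over_bound m.
have T1 := theta_le m.
have T0 : 0 <= theta m by apply: sumR_ge0 => p _ _; apply: lnn_ge0.
have l4 := ln4_le3; have l4p := ln4_pos.
have E5 : 3 / INR n * theta m ^ 2 <= 27.
  have h1 : theta m ^ 2 <= INR m ^ 2 * 9.
    have h0 : 0 <= INR m * ln 4 by have := pos_INR m; nra.
    have : theta m ^ 2 <= (INR m * ln 4) ^ 2 by apply: pow_incr; lra.
    have : (INR m * ln 4) ^ 2 <= INR m ^ 2 * 9.
      rewrite Rpow_mult_distr; apply: Rmult_le_compat_l; [apply: pow2_ge_0|].
      simpl; nra.
    lra.
  have h2 : theta m ^ 2 <= INR n * 9 by nra.
  apply: (Rmult_le_reg_l (INR n)) => //.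
  have -> : INR n * (3 / INR n * theta m ^ 2) = 3 * theta m ^ 2 by field; lra.
  lra.
rewrite E2 E3 in E1.
have hb := proj1 (Rabs_le_between _ _) E1.
apply: Rabs_le; lra.
Qed.

Lemma sqfree_decomp k : (0 < k)%nat -> exists d e, [/\ (0 < d)%nat, (0 < e)%nat,
  k = (d * d * e)%nat & forall p, prime p -> (logn p e <= 1)%nat].
Proof.
move=> k0.
pose P := fun d => (0 < d)%nat && (d * d %| k)%nat.
have exP : exists i, P i by exists 1%nat; rewrite /P /= mul1n dvd1n.
have ubP : forall i, P i -> (i <= k)%nat.
  move=> i /andP[i0 hi]; apply: leq_trans (dvdn_leq k0 hi).
  by rewrite leq_pmulr.
case: (ex_maxnP exP ubP) => d /andP[d0 hd] hmax.
have dd0 : (0 < d * d)%nat by rewrite muln_gt0 d0.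
exists d, (k %/ (d * d))%nat; split => //.
- by rewrite divn_gt0 // dvdn_leq.
- by rewrite mulnC divnK.
move=> p pp; rewrite leqNgt; apply/negP => hl.
have e0 : (0 < k %/ (d * d))%nat by rewrite divn_gt0 // dvdn_leq.
have hp2 : (expn p 2 %| k %/ (d * d))%nat by rewrite pfactor_dvdn.
have : P (d * p)%nat.
  rewrite /P muln_gt0 d0 prime_gt0 //=.
  rewrite -(divnK hd).
  have -> : (d * p * (d * p) = expn p 2 * (d * d))%nat by rewrite mulnACA mulnC expnS expn1.
  by apply: dvdn_mul.
move/hmax; have := prime_gt1 pp; rewrite -{2}(muln1 d) leq_pmul2l //; lia.
Qed.

Definition Rr (n k : nat) := \big[Rplus/0]_(0 <= p < n.+1 | prime p) (ln (INR p) * ind p k).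

Lemma Rr_le_ln n k : (1 <= k <= n)%nat -> Rr n k <= ln (INR k).
Proof.
move=> /andP[k0 kn]; rewrite (ln_factor (N := n)) //.
apply: sumR_le => p _ pp.
rewrite Rmult_comm; apply: Rmult_le_compat_r; first exact: lnn_ge0.
rewrite /ind; case: (boolP (p %| k)%nat) => hd.
  apply: INR_ge1; rewrite logn_gt0 mem_primes pp k0 //.
exact: pos_INR.
Qed.

Lemma sum_ge_single a b (P : pred nat) (F : nat -> R) j : (a <= j < b)%nat -> P j ->
  (forall i, (a <= i < b)%nat -> P i -> 0 <= F i) -> F j <= \big[Rplus/0]_(a <= i < b | P i) F i.
Proof.
move=> hj pj H.
rewrite big_mkcond (bigD1_seq j) ?mem_index_iota ?iota_uniq //= pj.
suff : 0 <= \big[Rplus/0]_(i <- index_iota a b | i != j) (if P i then F i else 0) by lra.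
rewrite big_seq_cond; apply: (big_ind (fun x => 0 <= x)); first lra.
  by move=> x y; lra.
move=> i /andP[hi _]; rewrite mem_index_iota in hi.
case: (boolP (P i)) => pi; [exact: H | lra].
Qed.

Lemma Rr_upper n k : (1 <= k <= n)%nat -> exists d, [/\ (1 <= d <= n)%nat, (d * d %| k)%nat &
  ln (INR k) - Rr n k <= 2 * ln (INR d)].
Proof.
move=> /andP[k0 kn].
have [d [e [d0 e0 ek he]]] := sqfree_decomp k0.
have hdk : (d <= k)%nat.
  apply: leq_trans (_ : (d * d <= k)%nat); first by rewrite leq_pmulr.
  by rewrite ek leq_pmulr.
have hek : (e <= k)%nat by rewrite ek leq_pmull // muln_gt0 d0.
exists d; split.
- by rewrite d0 (leq_trans hdk kn).
- by rewrite ek dvdn_mulr.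
have lk : ln (INR k) = 2 * ln (INR d) + ln (INR e).
  rewrite ek !mult_INR !ln_mult; try (apply: INR_pos; done); try (apply: Rmult_lt_0_compat; apply: INR_pos; done).
  ring.
have le : ln (INR e) <= Rr n k.
  rewrite (ln_factor (N := n)) //; last exact: leq_trans hek kn.
  apply: sumR_le => p _ pp.
  rewrite Rmult_comm; apply: Rmult_le_compat_l; first exact: lnn_ge0.
  have := he p pp; case hl: (logn p e) => [|[|l]] // _.
    by rewrite /ind; case: (p %| k)%nat; simpl; lra.
  have hpe : (p %| e)%nat.
    have : (0 < logn p e)%nat by rewrite hl.
    by rewrite logn_gt0 mem_primes => /and3P[].
  rewrite /ind (_ : (p %| k)%nat = true); last by rewrite ek; apply: dvdn_mull.
  simpl; lra.
lra.
Qed.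

Lemma ln_sq_le y : 1 <= y -> ln y ^ 2 <= 16 * sqrt y.
Proof.
move=> hy.
have s0 : 0 < sqrt y by apply: sqrt_lt_R0; lra.
have s1 : 1 <= sqrt y by rewrite -sqrt_1; apply: sqrt_le_1_alt.
set s := sqrt (sqrt y).
have t0 : 0 < s by apply: sqrt_lt_R0.
have t1 : 1 <= s by rewrite /s -sqrt_1; apply: sqrt_le_1_alt.
have ss : s * s = sqrt y by rewrite /s sqrt_sqrt; lra.
have yy : sqrt y * sqrt y = y by rewrite sqrt_sqrt; lra.
have ey : y = s ^ 4 by rewrite -yy -ss; ring.
have hl : ln y = 4 * ln s by rewrite ey ln_pow //; simpl; ring.
have l0 : 0 <= ln s by apply: ln_ge0.
have l1 : ln s <= s - 1 by apply: ln_le_sub1.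
rewrite hl -ss; nra.
Qed.

Lemma sum_inv_sqrt n : \big[Rplus/0]_(1 <= k < n.+1) / sqrt (INR k) <= 2 * sqrt (INR n).
Proof.
elim: n => [|n IH]; first by rewrite big_geq //= sqrt_0; lra.
rewrite sumR_recr //.
suff : / sqrt (INR n.+1) <= 2 * sqrt (INR n.+1) - 2 * sqrt (INR n) by lra.
set a := sqrt (INR n); set b := sqrt (INR n.+1).
have a0 : 0 <= a by apply: sqrt_pos.
have b0 : 0 < b by apply: sqrt_lt_R0; apply: INR_pos.
have aa : a * a = INR n by apply: sqrt_sqrt; apply: pos_INR.
have bb : b * b = INR n + 1 by rewrite /b sqrt_sqrt ?S_INR //; rewrite -S_INR; apply: pos_INR.
apply: (Rmult_le_reg_l b) => //.
rewrite Rinv_r; last lra.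
nra.
Qed.

Lemma mean_lnratio n : (1 <= n)%nat -> unif_mean n (fun k => (ln (INR n) - ln (INR k)) ^ 2) <= 32.
Proof.
move=> hn; have hN := INR_pos hn.
have sn0 : 0 < sqrt (INR n) by apply: sqrt_lt_R0.
have snn : sqrt (INR n) * sqrt (INR n) = INR n by apply: sqrt_sqrt; lra.
apply: Rle_trans (_ : unif_mean n (fun k => 16 * sqrt (INR n) * / sqrt (INR k)) <= _).
  apply: mean_le => // k /andP[k1 kn].
  have hK := INR_pos k1.
  rewrite -ln_div //.
  have hy : 1 <= INR n / INR k.
    apply: (Rmult_le_reg_r (INR k)) => //.
    have -> : INR n / INR k * INR k = INR n by field; lra.
    rewrite Rmult_1_l; apply: le_INR; apply/leP; done.
  apply: Rle_trans (ln_sq_le hy) _.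
  rewrite sqrt_div; try lra.
rewrite mean_scale /unif_mean.
have := sum_inv_sqrt n => hs.
apply: (Rmult_le_reg_l (INR n)) => //.
have -> : INR n * (16 * sqrt (INR n) *
    (\big[Rplus/0]_(1 <= k < n.+1) / sqrt (INR k) / INR n))
    = 16 * sqrt (INR n) * \big[Rplus/0]_(1 <= k < n.+1) / sqrt (INR k) by field; lra.
have : 16 * sqrt (INR n) * \big[Rplus/0]_(1 <= k < n.+1) / sqrt (INR k)
     <= 16 * sqrt (INR n) * (2 * sqrt (INR n)) by apply: Rmult_le_compat_l; lra.
nra.
Qed.

Lemma sq_mean_bound n : (1 <= n)%nat ->
  unif_mean n (fun k => \big[Rplus/0]_(1 <= d < n.+1) (ln (INR d) ^ 2 * ind (d * d) k)) <= 9.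
Proof.
move=> hn; rewrite mean_sum.
apply: Rle_trans (_ : \big[Rplus/0]_(1 <= d < n.+1) (ln (INR d) ^ 2 / (INR d * INR d)) <= _).
  apply: sumR_le => d /andP[d1 _] _.
  have dd : (0 < d * d)%nat by rewrite muln_gt0 d1.
  rewrite mean_scale mean_ind //.
  have [[_ h] _] := gm_bounds hn dd.
  rewrite mult_INR in h; rewrite /Rdiv; apply: Rmult_le_compat_l => //; apply: pow2_ge_0.
rewrite big_ltn // ln_1 /= Rmult_0_l Rdiv_0_l Rplus_0_l.
apply: Rle_trans (tele_sum n).
apply: sumR_le => j /andP[hj _] _.
have hj1 : (1 <= j)%nat by lia.
have hJ : 2 <= INR j by apply: (le_INR 2); apply/leP.
rewrite INR_pred //.
have h0 : 0 <= ln (INR j) ^ 2 by apply: pow2_ge_0.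
rewrite /Rdiv; apply: Rmult_le_compat; try lra.
  apply: Rlt_le; apply: Rinv_0_lt_compat; nra.
apply: Rinv_le_contravar; nra.
Qed.

Lemma varR_bound n : (1 <= n)%nat -> unif_var n (Rr n) <= 136.
Proof.
move=> hn.
apply: Rle_trans (var_le_c (Rr n) (ln (INR n)) hn) _.
apply: Rle_trans (_ : unif_mean n (fun k => 2 * (ln (INR n) - ln (INR k)) ^ 2 +
   8 * \big[Rplus/0]_(1 <= d < n.+1) (ln (INR d) ^ 2 * ind (d * d) k)) <= _).
  apply: mean_le => // k hk.
  have [d [hd hdk hl]] := Rr_upper hk.
  have hR := Rr_le_ln hk.
  case/andP: hk => k1 kn.
  have lkn : ln (INR k) <= ln (INR n).
    apply: ln_le; first exact: INR_pos. apply: le_INR; apply/leP; done.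
  case/andP: hd => d1 dn.
  have ld : 0 <= ln (INR d) by apply: ln_ge0; apply: INR_ge1.
  have hs : ln (INR d) ^ 2 <= \big[Rplus/0]_(1 <= d < n.+1) (ln (INR d) ^ 2 * ind (d * d) k).
    have := @sum_ge_single 1 n.+1 xpredT (fun j => ln (INR j) ^ 2 * ind (j * j) k) d.
    rewrite /ind hdk Rmult_1_r; apply => //.
      by rewrite d1 ltnS.
    move=> i _ _; case: (i * i %| k)%nat; [rewrite Rmult_1_r | rewrite Rmult_0_r]; try lra.
    apply: pow2_ge_0.
  have hb2 : (ln (INR k) - Rr n k) ^ 2 <= 4 * ln (INR d) ^ 2.
    have h0 : 0 <= ln (INR k) - Rr n k by lra.
    have : (ln (INR k) - Rr n k) ^ 2 <= (2 * ln (INR d)) ^ 2 by apply: pow_incr; lra.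
    lra.
  have hab : (Rr n k - ln (INR n)) ^ 2 <= 2 * (ln (INR n) - ln (INR k)) ^ 2 + 2 * (ln (INR k) - Rr n k) ^ 2.
    have := pow2_ge_0 ((ln (INR n) - ln (INR k)) - (ln (INR k) - Rr n k)).
    move=> h; simpl in h |- *; nra.
  lra.
rewrite mean_add !mean_scale.
have := mean_lnratio hn; have := sq_mean_bound hn; lra.
Qed.

Lemma X_decomp n m k : (m <= n)%nat -> (1 <= k)%nat ->
  ln (INR (utilde n m k)) = Rr n k - Tm m k.
Proof.
move=> mn k1.
rewrite /utilde ln_prod; last first.
  move=> p pp; case: (0 < logn p k)%nat => /=; last done.
  rewrite Nat.mul_1_r; exact: prime_gt0.
have -> : Rr n k = Tm m k + \big[Rplus/0]_(m.+1 <= p < n.+1 | prime p) (ln (INR p) * ind p k).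
  by rewrite /Rr /Tm (sumR_cat _ _ (n := m.+1)).
rewrite Rplus_comm /Rminus Rplus_assoc Rplus_opp_r Rplus_0_r.
apply: eq_bigr => p pp.
rewrite pow_INR ln_pow; last by apply: INR_pos; exact: prime_gt0.
rewrite Rmult_comm; congr Rmult.
rewrite /ind logn_gt0 mem_primes pp k1 /=.
by case: (p %| k)%nat.
Qed.

Lemma final_arith (L VT VR VX d eps : R) : 0 < d <= 1 / 2 -> d <= eps / 5 ->
  1 + 114 / d + 272 * (1 + / d) / d <= L ->
  Rabs (VT - L ^ 2 / 2) <= 21 * L + 36 -> 0 <= VR <= 136 ->
  (1 - d) * VT - / d * VR <= VX <= (1 + d) * VT + (1 + / d) * VR ->
  Rabs (VX / (/ 2 * L ^ 2) - 1) < eps.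
Proof.
move=> [d0 d1] de hL hT [r0 r1] [x0 x1].
have id0 : 0 < / d by apply: Rinv_0_lt_compat.
have t1 : 0 <= 114 / d by apply: Rdiv_le_0_compat; lra.
have t2 : 0 <= 272 * (1 + / d) / d by apply: Rdiv_le_0_compat; lra.
have L1 : 1 <= L by lra.
have dL1 : 114 <= d * L.
  have : d * (114 / d) <= d * L by apply: Rmult_le_compat_l; lra.
  have -> : d * (114 / d) = 114 by field; lra.
  done.
have dL2 : 272 * (1 + / d) <= d * L.
  have : d * (272 * (1 + / d) / d) <= d * L by apply: Rmult_le_compat_l; lra.
  have -> : d * (272 * (1 + / d) / d) = 272 * (1 + / d) by field; lra.
  done.
set Q := L ^ 2 / 2.
have hQ : 0 < Q by rewrite /Q; simpl; nra.
have hW : 21 * L + 36 <= d * Q by rewrite /Q; simpl; nra.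
have hK : (1 + / d) * 136 <= d * Q by rewrite /Q; simpl; nra.
have hVR1 : (1 + / d) * VR <= d * Q.
  have : (1 + / d) * VR <= (1 + / d) * 136 by apply: Rmult_le_compat_l; lra.
  lra.
have hVR2 : / d * VR <= d * Q.
  have : / d * VR <= (1 + / d) * VR by nra.
  lra.
have [T1 T2] := proj1 (Rabs_le_between _ _) hT; rewrite -/Q in T1 T2.
have U : VX <= Q + 4 * d * Q.
  have : (1 + d) * VT <= (1 + d) * (Q + d * Q) by apply: Rmult_le_compat_l; lra.
  have : (1 + d) * (Q + d * Q) <= Q + 3 * d * Q.
    have -> : (1 + d) * (Q + d * Q) = Q + 2 * d * Q + d * (d * Q) by ring.
    have : d * (d * Q) <= d * Q by have := Rmult_le_compat_r (d * Q) d 1; nra.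
    lra.
  lra.
have Lo : Q - 3 * d * Q <= VX.
  have : (1 - d) * (Q - d * Q) <= (1 - d) * VT by apply: Rmult_le_compat_l; lra.
  have : Q - 2 * d * Q <= (1 - d) * (Q - d * Q).
    have -> : (1 - d) * (Q - d * Q) = Q - 2 * d * Q + d * (d * Q) by ring.
    have : 0 <= d * (d * Q) by nra.
    lra.
  lra.
have e : VX / (/ 2 * L ^ 2) - 1 = (VX - Q) / Q by rewrite /Q; field; simpl; nra.
rewrite e.
have hdQ : 4 * d * Q < eps * Q.
  apply: Rmult_lt_compat_r => //; lra.
apply: Rabs_def1.
  apply: (Rmult_lt_reg_r Q) => //.
  have -> : (VX - Q) / Q * Q = VX - Q by field; lra.
  lra.
apply: (Rmult_lt_reg_r Q) => //.
have -> : (VX - Q) / Q * Q = VX - Q by field; lra.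
lra.
Qed.

Unset Implicit Arguments.
Set Strict Implicit.

Theorem theorem5p4 (m : nat -> nat)
  (Hle : exists N : nat, forall n : nat, (N <= n)%nat -> INR (m n) <= sqrt (INR n))
  (Hinf : is_lim_seq (fun n => INR (m n)) p_infty) :
  is_lim_seq
    (fun n => unif_var n (fun k => ln (INR (utilde n (m n) k)))
              / (/ 2 * (ln (INR (m n))) ^ 2))
    1.
Proof.
apply/is_lim_seq_spec => eps.
have e0 := cond_pos eps.
set d := Rmin (eps / 5) (1 / 2).
have d0 : 0 < d by apply: Rmin_glb_lt; lra.
have d1 : d <= 1 / 2 by apply: Rmin_r.
have d2 : d <= eps / 5 by apply: Rmin_l.
set Lb := 1 + 114 / d + 272 * (1 + / d) / d.
have Lb1 : 1 <= Lb.
  have : 0 <= 114 / d by apply: Rdiv_le_0_compat; lra.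
  have : 0 <= 272 * (1 + / d) / d.
    apply: Rdiv_le_0_compat; try lra.
    have : 0 < / d by apply: Rinv_0_lt_compat.
    lra.
  rewrite /Lb; lra.
have [N1 HN1] := proj2 (is_lim_seq_spec _ _) Hinf (exp Lb).
case: Hle => N0 HN0.
exists (maxn N0 N1) => n hn.
have hn0 : (N0 <= n)%nat by apply: leq_trans (leq_maxl N0 N1) _; apply/leP.
have hn1 : (N1 <= n)%coq_nat by apply/leP; apply: leq_trans (leq_maxr N0 N1) _; apply/leP.
have hM := HN1 n hn1.
have hS := HN0 n hn0.
set mm := m n in hM hS *.
have eLb : 1 + Lb <= exp Lb by apply: exp_ineq1_le.
have mpos : 0 < INR mm by lra.
have hL : Lb < ln (INR mm).
  rewrite -[X in X < _](ln_exp Lb); apply: ln_increasing => //; exact: exp_pos.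
have mm1 : (1 <= mm)%nat.
  apply/leP; apply: INR_le; simpl; lra.
have sq0 : 0 <= sqrt (INR n) by apply: sqrt_pos.
have hmn : INR mm ^ 2 <= INR n.
  have : INR mm * INR mm <= sqrt (INR n) * sqrt (INR n) by apply: Rmult_le_compat; lra.
  rewrite sqrt_sqrt; last exact: pos_INR.
  simpl; lra.
have mmR1 : 1 <= INR mm by apply: INR_ge1.
have n1 : (1 <= n)%nat by apply/leP; apply: INR_le; simpl; nra.
have mmn : (mm <= n)%nat by apply/leP; apply: INR_le; nra.
rewrite (var_ext (Y := fun k => Rr n k - Tm mm k)); last first.
  by move=> k /andP[k1 _]; apply: X_decomp.
have hV := var_diff_bounds (Rr n) (Tm mm) n1 d0.
have hT1 := varT_bound mm1 n1 hmn.
have hT2 := Dm_asym mm1.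
have hR1 := varR_bound n1.
have hR0 := var_ge0 (Rr n) n1.
apply: (final_arith (L := ln (INR mm)) (VT := unif_var n (Tm mm)) (VR := unif_var n (Rr n)) (d := d)) => //.
- by apply: Rlt_le.
- have : Rabs (unif_var n (Tm mm) - ln (INR mm) ^ 2 / 2) <=
         Rabs (unif_var n (Tm mm) - Dm mm) + Rabs (Dm mm - ln (INR mm) ^ 2 / 2).
    have -> : unif_var n (Tm mm) - ln (INR mm) ^ 2 / 2 =
              (unif_var n (Tm mm) - Dm mm) + (Dm mm - ln (INR mm) ^ 2 / 2) by ring.
    apply: Rabs_triang.
  lra.
Qed.
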